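(* Let $D_n=A_n$, $E_n=-B_n$, $F_n=C_n$. There is a constant $C>0$, independent of $n$, such that for every $n\in\mathbb N$ and every $t\in[0,T]$: $$\max\Big\{|D_n(t)|^2,|D_n'(t)|^2,\Big|\tfrac{D_n''(t)}{\lambda_n^{1/2}}\Big|^2,\Big|\tfrac{D_n''(t)}{\lambda_n^{3/2}}\Big|^2\Big\}\le C,\qquad \max\Big\{|E_n(t)|^2,|E_n'(t)|^2,\Big|\tfrac{E_n''(t)}{\lambda_n^{1/2}}\Big|^2,\Big|\tfrac{E_n''(t)}{\lambda_n^{3/2}}\Big|^2\Big\}\le C,$$ $$\max\Big\{|\lambda_n^{1/2}F_n(t)|^2,|\lambda_nF_n(t)|^2,|\lambda_n^{1/2}F_n'(t)|^2,|F_n''(t)|^2,\Big|\tfrac{F_n''(t)}{\lambda_n^{1/2}}\Big|^2\Big\}\le C.$$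
   Context: Setting: $0<s<1$, $\Omega\subset\mathbb R^N$ bounded open with Lipschitz boundary, $T>0$, real $\alpha,b,c$ with $b>0$ and $\gamma:=\alpha-c^2/b>0$. $0<\lambda_1\le\lambda_2\le\dots\to\infty$ are the eigenvalues of the Dirichlet fractional Laplacian $(-\Delta)_D^s$ on $\Omega$ (realization of $(-\Delta)^s$ in $L^2(\Omega)$ with zero exterior condition). For each $n$, $\lambda_{n,1},\lambda_{n,2},\lambda_{n,3}$ are the roots of $z^3+\alpha z^2+b\lambda_nz+c^2\lambda_n=0$; $\lambda_{n,1}$ is real and $\lambda_{n,3}=\overline{\lambda_{n,2}}$ is non-real, all with negative real parts, and as $n\to\infty$: $\lambda_{n,1}\to-c^2/b$, $\mathrm{Re}\,\lambda_{n,2}\to-\gamma/2$, $|\mathrm{Im}\,\lambda_{n,2}|\sim\sqrt{b\lambda_n}$. $\xi_{n,1}=(\lambda_{n,1}-\lambda_{n,2})(\lambda_{n,1}-\lambda_{n,3})$, $\xi_{n,2}=(\lambda_{n,1}-\lambda_{n,2})(\lambda_{n,2}-\lambda_{n,3})$, $\xi_{n,3}=(\lambda_{n,1}-\lambda_{n,3})(\lambda_{n,2}-\lambda_{n,3})$; $A_n(t)=\frac{\lambda_{n,2}\lambda_{n,3}}{\xi_{n,1}}e^{\lambda_{n,1}t}-\frac{\lambda_{n,1}\lambda_{n,3}}{\xi_{n,2}}e^{\lambda_{n,2}t}+\frac{\lambda_{n,1}\lambda_{n,2}}{\xi_{n,3}}e^{\lambda_{n,3}t}$, $B_n(t)=-\frac{\lambda_{n,2}+\lambda_{n,3}}{\xi_{n,1}}e^{\lambda_{n,1}t}+\frac{\lambda_{n,1}+\lambda_{n,3}}{\xi_{n,2}}e^{\lambda_{n,2}t}-\frac{\lambda_{n,1}+\lambda_{n,2}}{\xi_{n,3}}e^{\lambda_{n,3}t}$,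 $C_n(t)=\frac{1}{\xi_{n,1}}e^{\lambda_{n,1}t}-\frac{1}{\xi_{n,2}}e^{\lambda_{n,2}t}+\frac{1}{\xi_{n,3}}e^{\lambda_{n,3}t}$. *)

(* Defs.v *)
From Stdlib Require Import Reals.
Open Scope R_scope.

Definition cplx : Type := (R * R)%type.
Definition RtoC (r : R) : cplx := (r, 0).
Definition cadd (z w : cplx) : cplx := (fst z + fst w, snd z + snd w).
Definition copp (z : cplx) : cplx := (- fst z, - snd z).
Definition csub (z w : cplx) : cplx := cadd z (copp w).
Definition cmul (z w : cplx) : cplx :=
  (fst z * fst w - snd z * snd w, fst z * snd w + snd z * fst w).
Definition cinv (z : cplx) : cplx :=
  (fst z / (fst z ^ 2 + snd z ^ 2), - snd z / (fst z ^ 2 + snd z ^ 2)).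
Definition cdiv (z w : cplx) : cplx := cmul z (cinv w).
Definition cconj (z : cplx) : cplx := (fst z, - snd z).
Definition cexp (z : cplx) : cplx := (exp (fst z) * cos (snd z), exp (fst z) * sin (snd z)).
Definition cnorm2 (z : cplx) : R := fst z ^ 2 + snd z ^ 2.
Definition cscale (r : R) (z : cplx) : cplx := (r * fst z, r * snd z).

Definition cubic (alpha b c mu : R) (z : cplx) : cplx :=
  cadd (cadd (cadd (cmul z (cmul z z)) (cmul (RtoC alpha) (cmul z z)))
             (cmul (RtoC (b * mu)) z)) (RtoC (c ^ 2 * mu)).

Definition xi1 (l1 l2 l3 : cplx) : cplx := cmul (csub l1 l2) (csub l1 l3).
Definition xi2 (l1 l2 l3 : cplx) : cplx := cmul (csub l1 l2) (csub l2 l3).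
Definition xi3 (l1 l2 l3 : cplx) : cplx := cmul (csub l1 l3) (csub l2 l3).

Definition ecx (l : cplx) (t : R) : cplx := cexp (cmul l (RtoC t)).

Definition Afun (l1 l2 l3 : cplx) (t : R) : cplx :=
  cadd (csub (cmul (cdiv (cmul l2 l3) (xi1 l1 l2 l3)) (ecx l1 t))
             (cmul (cdiv (cmul l1 l3) (xi2 l1 l2 l3)) (ecx l2 t)))
       (cmul (cdiv (cmul l1 l2) (xi3 l1 l2 l3)) (ecx l3 t)).

Definition Bfun (l1 l2 l3 : cplx) (t : R) : cplx :=
  csub (cadd (copp (cmul (cdiv (cadd l2 l3) (xi1 l1 l2 l3)) (ecx l1 t)))
             (cmul (cdiv (cadd l1 l3) (xi2 l1 l2 l3)) (ecx l2 t)))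
       (cmul (cdiv (cadd l1 l2) (xi3 l1 l2 l3)) (ecx l3 t)).

Definition Cfun (l1 l2 l3 : cplx) (t : R) : cplx :=
  cadd (csub (cmul (cinv (xi1 l1 l2 l3)) (ecx l1 t))
             (cmul (cinv (xi2 l1 l2 l3)) (ecx l2 t)))
       (cmul (cinv (xi3 l1 l2 l3)) (ecx l3 t)).

Definition cderiv (f f' : R -> cplx) : Prop :=
  forall t, derivable_pt_lim (fun u => fst (f u)) t (fst (f' t)) /\
            derivable_pt_lim (fun u => snd (f u)) t (snd (f' t)).

(* Main.v *)
Require Import Defs.
From Stdlib Require Import Reals Lra Psatz Lia FunctionalExtensionality.
From Coquelicot Require Import Coquelicot.
Open Scope R_scope.

Fixpoint cpw (l : cplx) (k : nat) : cplx :=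
  match k with O => (1, 0) | S k' => cmul l (cpw l k') end.

Definition G3 (a1 a2 a3 l1 l2 l3 : cplx) (k : nat) (t : R) : cplx :=
  cadd (cadd (cmul (cmul a1 (cpw l1 k)) (ecx l1 t))
             (cmul (cmul a2 (cpw l2 k)) (ecx l2 t)))
       (cmul (cmul a3 (cpw l3 k)) (ecx l3 t)).

Lemma term_deriv (w l : cplx) :
  cderiv (fun t => cmul w (ecx l t)) (fun t => cmul (cmul w l) (ecx l t)).
Proof.
  destruct w as [w1 w2]; destruct l as [a q].
  intro t; unfold ecx, cexp, cmul, RtoC; simpl; split; apply is_derive_Reals;
  auto_derive; auto; unfold Rminus; ring.
Qed.

Lemma cderiv_add f f' g g' : cderiv f f' -> cderiv g g' ->
  cderiv (fun t => cadd (f t) (g t)) (fun t => cadd (f' t) (g' t)).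
Proof.
  intros Hf Hg t; destruct (Hf t); destruct (Hg t); unfold cadd; simpl; split;
  apply derivable_pt_lim_plus; auto.
Qed.

Lemma cderiv_ext f g g' : (forall t, g t = g' t) -> cderiv f g -> cderiv f g'.
Proof. intros He H t; rewrite <- He; apply H. Qed.

Lemma cderiv_fext f f' g : (forall t, f t = f' t) -> cderiv f g -> cderiv f' g.
Proof. intros He H. replace f' with f; auto. apply functional_extensionality; auto. Qed.

Lemma cderiv_uniq f g1 g2 : cderiv f g1 -> cderiv f g2 -> forall t, g1 t = g2 t.
Proof.
  intros H1 H2 t; destruct (H1 t) as [A1 B1]; destruct (H2 t) as [A2 B2].
  pose proof (uniqueness_limite _ _ _ _ A1 A2).
  pose proof (uniqueness_limite _ _ _ _ B1 B2).
  destruct (g1 t), (g2 t); simpl in *; subst; auto.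
Qed.

Lemma G3_deriv a1 a2 a3 l1 l2 l3 k :
  cderiv (G3 a1 a2 a3 l1 l2 l3 k) (G3 a1 a2 a3 l1 l2 l3 (S k)).
Proof.
  unfold G3.
  apply cderiv_add; [apply cderiv_add|];
  (eapply cderiv_ext; [|apply term_deriv]); intro t; simpl;
  generalize (cpw l1 k) (cpw l2 k) (cpw l3 k) (ecx l1 t) (ecx l2 t) (ecx l3 t);
  intros [] [] [] [] [] [];
  destruct a1, a2, a3, l1, l2, l3; unfold cmul; simpl; f_equal; ring.
Qed.

Lemma shapeA c1 c2 c3 e1 e2 e3 :
  cadd (csub (cmul c1 e1) (cmul c2 e2)) (cmul c3 e3) =
  cadd (cadd (cmul (cmul c1 (1,0)) e1) (cmul (cmul (copp c2) (1,0)) e2))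
       (cmul (cmul c3 (1,0)) e3).
Proof.
  destruct c1, c2, c3, e1, e2, e3; unfold cadd, csub, copp, cmul; simpl; f_equal; ring.
Qed.

Lemma shapeB c1 c2 c3 e1 e2 e3 :
  copp (csub (cadd (copp (cmul c1 e1)) (cmul c2 e2)) (cmul c3 e3)) =
  cadd (cadd (cmul (cmul c1 (1,0)) e1) (cmul (cmul (copp c2) (1,0)) e2))
       (cmul (cmul c3 (1,0)) e3).
Proof.
  destruct c1, c2, c3, e1, e2, e3; unfold cadd, csub, copp, cmul; simpl; f_equal; ring.
Qed.

Lemma cnorm2_mul z w : cnorm2 (cmul z w) = cnorm2 z * cnorm2 w.
Proof. destruct z, w; unfold cnorm2, cmul; simpl; ring. Qed.

Lemma cnorm2_ge0 z : 0 <= cnorm2 z.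
Proof. destruct z; unfold cnorm2; simpl; nra. Qed.

Lemma cnorm2_inv z : cnorm2 z <> 0 -> cnorm2 (cinv z) = / cnorm2 z.
Proof. destruct z as [x y]; unfold cnorm2, cinv; simpl; intro H; field. intro E; apply H; rewrite <- E; ring. Qed.

Lemma cnorm2_div z w : cnorm2 w <> 0 -> cnorm2 (cdiv z w) = cnorm2 z / cnorm2 w.
Proof. intro H; unfold cdiv; rewrite cnorm2_mul, cnorm2_inv; auto. Qed.

Lemma cnorm2_opp z : cnorm2 (copp z) = cnorm2 z.
Proof. destruct z; unfold cnorm2, copp; simpl; ring. Qed.

Lemma cnorm2_scale s z : cnorm2 (cscale s z) = s ^ 2 * cnorm2 z.
Proof. destruct z; unfold cnorm2, cscale; simpl; ring. Qed.

Lemma cnorm2_cpw l k : cnorm2 (cpw l k) = cnorm2 l ^ k.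
Proof. induction k; simpl. unfold cnorm2; simpl; ring. rewrite cnorm2_mul, IHk; ring. Qed.

Lemma cnorm2_ecx l t : fst l <= 0 -> 0 <= t -> cnorm2 (ecx l t) <= 1.
Proof.
  destruct l as [a q]; simpl; intros Ha Ht; unfold ecx, cexp, cnorm2, cmul, RtoC; simpl.
  set (x := a * t - q * 0). set (y := a * 0 + q * t).
  assert (exp x <= 1).
  { assert (x <= 0) by (unfold x; nra).
    destruct (Rle_lt_or_eq_dec x 0 H) as [l|e];
    [left; rewrite <- exp_0; apply exp_increasing; auto | rewrite e, exp_0; lra]. }
  pose proof (sin2_cos2 y). unfold Rsqr in *. pose proof (exp_pos x). nra.
Qed.

Lemma cnorm2_add3 x y z : cnorm2 (cadd (cadd x y) z) <= 3 * (cnorm2 x + cnorm2 y + cnorm2 z).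
Proof. destruct x as [x1 x2], y as [y1 y2], z as [z1 z2]; unfold cnorm2, cadd; simpl.
  pose proof (pow2_ge_0 (x1-y1)); pose proof (pow2_ge_0 (x1-z1)); pose proof (pow2_ge_0 (y1-z1));
  pose proof (pow2_ge_0 (x2-y2)); pose proof (pow2_ge_0 (x2-z2)); pose proof (pow2_ge_0 (y2-z2)).
  nra. Qed.

Lemma G3_bound a1 a2 a3 l1 l2 l3 k t :
  fst l1 <= 0 -> fst l2 <= 0 -> fst l3 <= 0 -> 0 <= t ->
  cnorm2 (G3 a1 a2 a3 l1 l2 l3 k t) <=
  3 * (cnorm2 a1 * cnorm2 l1 ^ k + cnorm2 a2 * cnorm2 l2 ^ k + cnorm2 a3 * cnorm2 l3 ^ k).
Proof.
  intros h1 h2 h3 ht. unfold G3. eapply Rle_trans; [apply cnorm2_add3|].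
  rewrite !cnorm2_mul, !cnorm2_cpw.
  assert (forall a l, fst l <= 0 -> cnorm2 a * cnorm2 l ^ k * cnorm2 (ecx l t) <= cnorm2 a * cnorm2 l ^ k).
  { intros a l hl. pose proof (cnorm2_ecx l t hl ht). pose proof (cnorm2_ge0 a).
    pose proof (pow_le _ k (cnorm2_ge0 l)).
    rewrite <- (Rmult_1_r (cnorm2 a * cnorm2 l ^ k)) at 2.
    apply Rmult_le_compat_l; auto. apply Rmult_le_pos; auto. }
  pose proof (H a1 l1 h1). pose proof (H a2 l2 h2). pose proof (H a3 l3 h3). lra.
Qed.

Lemma sq_pos x : x <> 0 -> 0 < x ^ 2.
Proof. intro h; destruct (Rlt_or_le x 0); [nra|]. destruct H; [nra|]. subst; contradiction. Qed.

Lemma roots_facts alpha b c mu r p q :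
  0 < b -> 0 < alpha - c ^ 2 / b -> 0 < mu ->
  cubic alpha b c mu (RtoC r) = RtoC 0 ->
  cubic alpha b c mu (p, q) = RtoC 0 -> q <> 0 ->
  r <= 0 /\ p <= 0 /\ r ^ 2 <= alpha ^ 2 /\ p ^ 2 <= alpha ^ 2 /\
  p ^ 2 + q ^ 2 <= b * mu /\ 2 * b * mu - alpha ^ 2 <= 2 * q ^ 2.
Proof.
  intros hb hg hmu H1 H2 hq.
  unfold cubic, cadd, cmul, RtoC in H1, H2; simpl in H1, H2.
  injection H1 as Hr _. injection H2 as E2 E1.
  assert (Hc : c ^ 2 < alpha * b).
  { assert (c ^ 2 / b * b = c ^ 2) by (field; lra). nra. }
  assert (Ha : 0 < alpha) by (pose proof (pow2_ge_0 c); nra).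
  set (F1 := 3 * p ^ 2 - q ^ 2 + 2 * alpha * p + b * mu).
  assert (HF1 : F1 = 0).
  { assert (q * F1 = 0) by (unfold F1; rewrite <- E1; ring).
    destruct (Rmult_integral _ _ H); [contradiction|auto]. }
  set (F2 := p ^ 3 - 3 * p * q ^ 2 + alpha * (p ^ 2 - q ^ 2) + b * mu * p + c ^ 2 * mu).
  assert (HF2 : F2 = 0) by (unfold F2; rewrite <- E2; ring).
  set (d := (r - p) ^ 2 + q ^ 2).
  assert (hd : 0 < d) by (unfold d; pose proof (pow2_ge_0 (r-p)); assert (0 < q^2) by (apply sq_pos; auto); lra).
  assert (Hrr : (r + alpha + 2 * p) * d = 0).
  { assert (Hr' : r ^ 3 + alpha * r ^ 2 + b * mu * r + c ^ 2 * mu = 0) by (rewrite <- Hr; ring).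
    transitivity (r ^ 3 + alpha * r ^ 2 + b * mu * r + c ^ 2 * mu - (r - p) * F1 - F2).
    unfold d, F1, F2; ring. rewrite Hr', HF1, HF2; ring. }
  assert (Hrv : r = - alpha - 2 * p).
  { destruct (Rmult_integral _ _ Hrr); lra. }
  assert (Hq2 : q ^ 2 = 3 * p ^ 2 + 2 * alpha * p + b * mu) by (unfold F1 in HF1; lra).
  assert (Hcm : c ^ 2 * mu = - r * (p ^ 2 + q ^ 2)).
  { transitivity (F2 - p * F1 + (alpha + 2 * p) * (p ^ 2 + q ^ 2)).
    unfold F1, F2; ring. rewrite HF1, HF2, Hrv; ring. }
  assert (hm : 0 < p ^ 2 + q ^ 2) by (pose proof (pow2_ge_0 p); assert (0 < q^2) by (apply sq_pos; auto); lra).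
  assert (hr : r <= 0).
  { pose proof (pow2_ge_0 c). destruct (Rle_or_lt r 0); auto. nra. }
  assert (hr2 : - alpha <= r).
  { destruct (Rle_or_lt (-alpha) r); auto. exfalso.
    assert (hp : 0 < p) by lra.
    assert (p ^ 2 + q ^ 2 = b * mu + 4 * p ^ 2 + 2 * alpha * p) by lra.
    assert (c ^ 2 * mu >= alpha * b * mu).
    { rewrite Hcm, H0. rewrite Hrv. nra. }
    nra. }
  repeat split; try nra.
Qed.

Definition Tsum (A1 A2 A3 N1 N2 N3 : R) (k : nat) : R :=
  3 * (A1 * N1 ^ k + A2 * N2 ^ k + A3 * N3 ^ k).

Definition Bfin (r p q mu : R) : R :=
  let m := p ^ 2 + q ^ 2 in let d := (r - p) ^ 2 + q ^ 2 in let e := d * (4 * q ^ 2) in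
  let AD1 := m * m / (d * d) in let AD2 := r ^ 2 * m / e in
  let AE1 := 4 * p ^ 2 / (d * d) in let AE2 := ((r + p) ^ 2 + q ^ 2) / e in
  let AF1 := 1 / (d * d) in let AF2 := 1 / e in
  Tsum AD1 AD2 AD2 (r ^ 2) m m 0 + Tsum AD1 AD2 AD2 (r ^ 2) m m 1 +
  / mu * Tsum AD1 AD2 AD2 (r ^ 2) m m 2 + / mu ^ 3 * Tsum AD1 AD2 AD2 (r ^ 2) m m 2 +
  Tsum AE1 AE2 AE2 (r ^ 2) m m 0 + Tsum AE1 AE2 AE2 (r ^ 2) m m 1 +
  / mu * Tsum AE1 AE2 AE2 (r ^ 2) m m 2 + / mu ^ 3 * Tsum AE1 AE2 AE2 (r ^ 2) m m 2 +
  mu * Tsum AF1 AF2 AF2 (r ^ 2) m m 0 + mu ^ 2 * Tsum AF1 AF2 AF2 (r ^ 2) m m 0 +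
  mu * Tsum AF1 AF2 AF2 (r ^ 2) m m 1 + Tsum AF1 AF2 AF2 (r ^ 2) m m 2 +
  / mu * Tsum AF1 AF2 AF2 (r ^ 2) m m 2.

Lemma le_div x y c : 0 < y -> x <= c * y -> x * / y <= c.
Proof. intros hy h. apply Rmult_le_reg_r with y; auto. rewrite Rmult_assoc, Rinv_l; lra. Qed.

Lemma bnd_mul a b L i : 0 <= a <= L ^ i -> 0 <= b <= L -> 0 <= a * b <= L ^ (S i).
Proof. intros [] []; split. apply Rmult_le_pos; auto. simpl. rewrite Rmult_comm. apply Rmult_le_compat; auto. Qed.

Lemma bnd_up x L i j : 1 <= L -> (i <= j)%nat -> 0 <= x <= L ^ i -> 0 <= x <= L ^ j.
Proof. intros hL hij []. split; auto. eapply Rle_trans; eauto. apply Rle_pow; auto. Qed.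

Lemma bnd_base a L : 0 <= a <= L -> 0 <= a <= L ^ 1.
Proof. rewrite pow_1; auto. Qed.

Lemma piece_a a b M : 0 <= a <= M -> 0 <= b <= M -> 3 * (a + 2 * b) <= 18 * M.
Proof. lra. Qed.
Lemma piece_b a b M : 0 <= a <= M -> 0 <= b <= M -> 3 * (4 * a + 2 * b) <= 18 * M.
Proof. lra. Qed.

Ltac prodb := repeat (apply bnd_mul; [|assumption]); apply bnd_base; assumption.
Ltac B hL1 := eapply bnd_up; [exact hL1 | shelve | prodb].

Lemma asym alpha b r p q mu :
  0 < b -> 1 <= mu -> alpha ^ 2 <= b * mu -> r ^ 2 <= alpha ^ 2 -> p ^ 2 <= alpha ^ 2 ->
  p ^ 2 + q ^ 2 <= b * mu -> 2 * b * mu - alpha ^ 2 <= 2 * q ^ 2 ->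
  Bfin r p q mu <= 234 * (10 + 2 / b + b + alpha ^ 2) ^ 7.
Proof.
  intros hb hmu hab hr hp hm hq.
  set (L := 10 + 2 / b + b + alpha ^ 2).
  assert (hb' : 0 < / b) by (apply Rinv_0_lt_compat; auto).
  assert (hL1 : 1 <= L) by (unfold L; unfold Rdiv; pose proof (pow2_ge_0 alpha); nra).
  assert (hq2 : b * mu <= 2 * q ^ 2) by (pose proof (pow2_ge_0 alpha); nra).
  assert (hqpos : 0 < q ^ 2) by nra.
  assert (hdq : q ^ 2 <= (r - p) ^ 2 + q ^ 2) by (pose proof (pow2_ge_0 (r - p)); lra).
  unfold Bfin.
  set (m := p ^ 2 + q ^ 2) in *. set (d := (r - p) ^ 2 + q ^ 2) in *.
  assert (hd : 0 < d) by lra.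
  assert (h4q : 0 < 4 * q ^ 2) by lra.
  assert (hm0 : 0 <= m) by (unfold m; pose proof (pow2_ge_0 p); lra).
  assert (hr0 : 0 <= r ^ 2) by apply pow2_ge_0.
  assert (hp0 : 0 <= p ^ 2) by apply pow2_ge_0.
  set (S := (r + p) ^ 2 + q ^ 2).
  assert (hS : 0 <= S <= 2 * r ^ 2 + 2 * p ^ 2 + m).
  { unfold S, m; split. pose proof (pow2_ge_0 (r+p)); lra. pose proof (pow2_ge_0 (r-p)); nra. }
  assert (hmu0 : 0 < mu) by lra.
  assert (hbL : b <= L) by (unfold L; unfold Rdiv; pose proof (pow2_ge_0 alpha); nra).
  assert (hb2L : 2 / b <= L) by (unfold L; pose proof (pow2_ge_0 alpha); lra).
  assert (haL : alpha ^ 2 <= L) by (unfold L; unfold Rdiv; nra).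
  assert (h10L : 10 <= L) by (unfold L; unfold Rdiv; pose proof (pow2_ge_0 alpha); nra).
  assert (X1 : 0 <= m * / d <= L).
  { split. apply Rmult_le_pos; [|left; apply Rinv_0_lt_compat]; auto.
    apply Rle_trans with 2; [|lra]. apply le_div; auto. lra. }
  assert (X2 : 0 <= r ^ 2 * / d <= L).
  { split. apply Rmult_le_pos; [|left; apply Rinv_0_lt_compat]; auto.
    apply Rle_trans with 2; [|lra]. apply le_div; auto. lra. }
  assert (X3 : 0 <= p ^ 2 * / d <= L).
  { split. apply Rmult_le_pos; [|left; apply Rinv_0_lt_compat]; auto.
    apply Rle_trans with 2; [|lra]. apply le_div; auto. lra. }
  assert (XS : 0 <= S * / d <= L).
  { split. apply Rmult_le_pos; [lra|left; apply Rinv_0_lt_compat]; auto.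
    apply Rle_trans with 10; [|lra]. apply le_div; auto. lra. }
  assert (Y1 : 0 <= m * / (4 * q ^ 2) <= L).
  { split. apply Rmult_le_pos; [|left; apply Rinv_0_lt_compat]; auto.
    apply Rle_trans with 1; [|lra]. apply le_div; auto. lra. }
  assert (W1 : 0 <= mu * / d <= L).
  { split. apply Rmult_le_pos; [lra|left; apply Rinv_0_lt_compat]; auto.
    apply Rle_trans with (2 / b); [|lra]. apply le_div; auto.
    assert (2 / b * d = mu + 2 / b * (d - b * mu / 2)) by (field; lra).
    rewrite H. assert (0 <= 2 / b * (d - b * mu / 2)).
    { apply Rmult_le_pos. unfold Rdiv; lra. lra. } lra. }
  assert (W2 : 0 <= mu * / (4 * q ^ 2) <= L).
  { split. apply Rmult_le_pos; [lra|left; apply Rinv_0_lt_compat]; auto.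
    apply Rle_trans with (2 / b); [|lra]. apply le_div; auto.
    assert (2 / b * (4 * q ^ 2) = mu + 2 / b * (4 * q ^ 2 - b * mu / 2)) by (field; lra).
    rewrite H. assert (0 <= 2 / b * (4 * q ^ 2 - b * mu / 2)).
    { apply Rmult_le_pos. unfold Rdiv; lra. lra. } lra. }
  assert (Z : 0 <= m * / mu <= L).
  { split. apply Rmult_le_pos; [|left; apply Rinv_0_lt_compat]; auto.
    apply Rle_trans with b; [|lra]. apply le_div; auto; lra. }
  assert (I : 0 <= / mu <= L).
  { split. left; apply Rinv_0_lt_compat; auto.
    apply Rle_trans with 1; [|lra]. rewrite <- Rinv_1. apply Rinv_le_contravar; lra. }
  assert (R2 : 0 <= r ^ 2 <= L) by lra.
  assert (hne : d <> 0 /\ q <> 0 /\ mu <> 0).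
  { split; [lra|split; [|lra]]. intro; subst; simpl in hqpos; lra. }
  destruct hne as [hd0 [hq0 hmu1]].
  replace (234 * L ^ 7) with (18 * L ^ 7+18 * L ^ 7+18 * L ^ 7+18 * L ^ 7+18 * L ^ 7+18 * L ^ 7+18 * L ^ 7+18 * L ^ 7+18 * L ^ 7+18 * L ^ 7+18 * L ^ 7+18 * L ^ 7+18 * L ^ 7) by ring.
  repeat apply Rplus_le_compat.
  - match goal with |- ?X <= _ => replace X with (3*(m*/d*(m*/d)+2*(r^2*/d*(m*/(4*q^2))))) by (unfold Tsum; simpl; field; auto) end.
    apply piece_a; B hL1.
  - match goal with |- ?X <= _ => replace X with (3*(m*/d*(m*/d)*r^2+2*(r^2*(m*/d)*(m*/(4*q^2))))) by (unfold Tsum; simpl; field; auto) end.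
    apply piece_a; B hL1.
  - match goal with |- ?X <= _ => replace X with (3*(m*/d*(m*/d)*r^2*r^2*/mu+2*(r^2*(m*/d)*(m*/(4*q^2))*(m*/mu)))) by (unfold Tsum; simpl; field; auto) end.
    apply piece_a; B hL1.
  - match goal with |- ?X <= _ => replace X with (3*(m*/d*(m*/d)*r^2*r^2*/mu*/mu*/mu+2*(r^2*(m*/d)*(m*/(4*q^2))*(m*/mu)*/mu*/mu))) by (unfold Tsum; simpl; field; auto) end.
    apply piece_a; B hL1.
  - match goal with |- ?X <= _ => replace X with (3*(4*(p^2*/d*(mu*/d)*/mu)+2*(S*/d*(mu*/(4*q^2))*/mu))) by (unfold Tsum; simpl; field; auto) end.
    apply piece_b; B hL1.
  - match goal with |- ?X <= _ => replace X with (3*(4*(p^2*/d*(r^2*/d))+2*(S*/d*(m*/(4*q^2))))) by (unfold Tsum; simpl; field; auto) end.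
    apply piece_b; B hL1.
  - match goal with |- ?X <= _ => replace X with (3*(4*(p^2*/d*(r^2*/d)*r^2*/mu)+2*(S*/d*(m*/(4*q^2))*(m*/mu)))) by (unfold Tsum; simpl; field; auto) end.
    apply piece_b; B hL1.
  - match goal with |- ?X <= _ => replace X with (3*(4*(p^2*/d*(r^2*/d)*r^2*/mu*/mu*/mu)+2*(S*/d*(m*/(4*q^2))*(m*/mu)*/mu*/mu))) by (unfold Tsum; simpl; field; auto) end.
    apply piece_b; B hL1.
  - match goal with |- ?X <= _ => replace X with (3*(mu*/d*(mu*/d)*/mu+2*(mu*/d*(mu*/(4*q^2))*/mu))) by (unfold Tsum; simpl; field; auto) end.
    apply piece_a; B hL1.
  - match goal with |- ?X <= _ => replace X with (3*(mu*/d*(mu*/d)+2*(mu*/d*(mu*/(4*q^2))))) by (unfold Tsum; simpl; field; auto) end.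
    apply piece_a; B hL1.
  - match goal with |- ?X <= _ => replace X with (3*(mu*/d*(r^2*/d)+2*(mu*/d*(m*/(4*q^2))))) by (unfold Tsum; simpl; field; auto) end.
    apply piece_a; B hL1.
  - match goal with |- ?X <= _ => replace X with (3*(r^2*/d*(r^2*/d)+2*(m*/d*(m*/(4*q^2))))) by (unfold Tsum; simpl; field; auto) end.
    apply piece_a; B hL1.
  - match goal with |- ?X <= _ => replace X with (3*(r^2*/d*(r^2*/d)*/mu+2*(m*/d*(m*/(4*q^2))*/mu))) by (unfold Tsum; simpl; field; auto) end.
    apply piece_a; B hL1.
  Unshelve. all: lia.
Qed.

Definition Bgen AD1 AD2 AD3 AE1 AE2 AE3 AF1 AF2 AF3 N1 N2 N3 mu :=
  Tsum AD1 AD2 AD3 N1 N2 N3 0 + Tsum AD1 AD2 AD3 N1 N2 N3 1 +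
  / mu * Tsum AD1 AD2 AD3 N1 N2 N3 2 + / mu ^ 3 * Tsum AD1 AD2 AD3 N1 N2 N3 2 +
  Tsum AE1 AE2 AE3 N1 N2 N3 0 + Tsum AE1 AE2 AE3 N1 N2 N3 1 +
  / mu * Tsum AE1 AE2 AE3 N1 N2 N3 2 + / mu ^ 3 * Tsum AE1 AE2 AE3 N1 N2 N3 2 +
  mu * Tsum AF1 AF2 AF3 N1 N2 N3 0 + mu ^ 2 * Tsum AF1 AF2 AF3 N1 N2 N3 0 +
  mu * Tsum AF1 AF2 AF3 N1 N2 N3 1 + Tsum AF1 AF2 AF3 N1 N2 N3 2 +
  / mu * Tsum AF1 AF2 AF3 N1 N2 N3 2.

Lemma Tsum_ge0 A1 A2 A3 N1 N2 N3 k : 0 <= A1 -> 0 <= A2 -> 0 <= A3 -> 0 <= N1 -> 0 <= N2 -> 0 <= N3 ->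
  0 <= Tsum A1 A2 A3 N1 N2 N3 k.
Proof.
  intros. unfold Tsum. pose proof (pow_le N1 k H2). pose proof (pow_le N2 k H3). pose proof (pow_le N3 k H4).
  assert (0 <= A1 * N1 ^ k) by (apply Rmult_le_pos; auto).
  assert (0 <= A2 * N2 ^ k) by (apply Rmult_le_pos; auto).
  assert (0 <= A3 * N3 ^ k) by (apply Rmult_le_pos; auto). lra.
Qed.

Lemma G3_eq_bound a1 a2 a3 l1 l2 l3 k f f2 t s :
  fst l1 <= 0 -> fst l2 <= 0 -> fst l3 <= 0 -> 0 <= t ->
  (forall t, f t = G3 a1 a2 a3 l1 l2 l3 k t) -> f2 = s ^ 2 ->
  cnorm2 (cscale s (f t)) <= f2 * Tsum (cnorm2 a1) (cnorm2 a2) (cnorm2 a3) (cnorm2 l1) (cnorm2 l2) (cnorm2 l3) k.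
Proof.
  intros h1 h2 h3 ht hf hs. rewrite cnorm2_scale, hf, hs.
  apply Rmult_le_compat_l. apply pow2_ge_0. apply G3_bound; auto.
Qed.

Lemma cscale1 z : cscale 1 z = z.
Proof. destruct z; unfold cscale; simpl; f_equal; ring. Qed.

Lemma scale_facts mu : 0 < mu ->
  / mu = (/ sqrt mu) ^ 2 /\ / mu ^ 3 = (/ (mu * sqrt mu)) ^ 2 /\ mu = (sqrt mu) ^ 2 /\ 1 = 1 ^ 2.
Proof.
  intro h. pose proof (sqrt_lt_R0 _ h). assert (hs : sqrt mu * sqrt mu = mu) by (apply sqrt_sqrt; lra).
  repeat split.
  - replace ((/ sqrt mu) ^ 2) with (/ (sqrt mu * sqrt mu)) by (field; lra). now rewrite hs.
  - replace ((/ (mu * sqrt mu)) ^ 2) with (/ (mu * mu * (sqrt mu * sqrt mu))) by (field; lra).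
    rewrite hs. field. lra.
  - simpl. rewrite Rmult_1_r. auto.
  - ring.
Qed.

Lemma norms r p q : q <> 0 ->
  let l1 := RtoC r in let l2 := (p, q) in let l3 := cconj (p, q) in
  let m := p ^ 2 + q ^ 2 in let d := (r - p) ^ 2 + q ^ 2 in
  cnorm2 l1 = r ^ 2 /\ cnorm2 l2 = m /\ cnorm2 l3 = m /\
  cnorm2 (cdiv (cmul l2 l3) (xi1 l1 l2 l3)) = m * m / (d * d) /\
  cnorm2 (copp (cdiv (cmul l1 l3) (xi2 l1 l2 l3))) = r ^ 2 * m / (d * (4 * q ^ 2)) /\
  cnorm2 (cdiv (cmul l1 l2) (xi3 l1 l2 l3)) = r ^ 2 * m / (d * (4 * q ^ 2)) /\
  cnorm2 (cdiv (cadd l2 l3) (xi1 l1 l2 l3)) = 4 * p ^ 2 / (d * d) /\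
  cnorm2 (copp (cdiv (cadd l1 l3) (xi2 l1 l2 l3))) = ((r + p) ^ 2 + q ^ 2) / (d * (4 * q ^ 2)) /\
  cnorm2 (cdiv (cadd l1 l2) (xi3 l1 l2 l3)) = ((r + p) ^ 2 + q ^ 2) / (d * (4 * q ^ 2)) /\
  cnorm2 (cinv (xi1 l1 l2 l3)) = 1 / (d * d) /\
  cnorm2 (copp (cinv (xi2 l1 l2 l3))) = 1 / (d * (4 * q ^ 2)) /\
  cnorm2 (cinv (xi3 l1 l2 l3)) = 1 / (d * (4 * q ^ 2)).
Proof.
  intros hq l1 l2 l3 m d.
  assert (hq2 : 0 < q ^ 2) by (apply sq_pos; auto).
  assert (hd : 0 < d) by (unfold d; pose proof (pow2_ge_0 (r - p)); lra).
  assert (x1 : cnorm2 (xi1 l1 l2 l3) = d * d).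
  { unfold xi1; rewrite cnorm2_mul. unfold d, l1, l2, l3, cnorm2, csub, cadd, copp, cconj, RtoC; simpl; ring. }
  assert (x2 : cnorm2 (xi2 l1 l2 l3) = d * (4 * q ^ 2)).
  { unfold xi2; rewrite cnorm2_mul. unfold d, l1, l2, l3, cnorm2, csub, cadd, copp, cconj, RtoC; simpl; ring. }
  assert (x3 : cnorm2 (xi3 l1 l2 l3) = d * (4 * q ^ 2)).
  { unfold xi3; rewrite cnorm2_mul. unfold d, l1, l2, l3, cnorm2, csub, cadd, copp, cconj, RtoC; simpl; ring. }
  assert (n1 : cnorm2 (xi1 l1 l2 l3) <> 0) by (rewrite x1; nra).
  assert (n2 : cnorm2 (xi2 l1 l2 l3) <> 0) by (rewrite x2; nra).
  assert (n3 : cnorm2 (xi3 l1 l2 l3) <> 0) by (rewrite x3; nra).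
  repeat split; rewrite ?cnorm2_opp, ?cnorm2_div, ?cnorm2_inv, ?x1, ?x2, ?x3; auto;
  unfold Rdiv; rewrite ?Rmult_1_l; try reflexivity; f_equal;
  unfold m, l1, l2, l3, cnorm2, cmul, cadd, cconj, RtoC; simpl; ring.
Qed.

Lemma per_n (mu r p q : R) : 0 < mu -> r <= 0 -> p <= 0 -> q <> 0 ->
  forall (D1 D2 E1 E2 F1 F2 : R -> cplx),
      let D := Afun (RtoC r) (p, q) (cconj (p, q)) in
      let E := fun t => copp (Bfun (RtoC r) (p, q) (cconj (p, q)) t) in
      let F := Cfun (RtoC r) (p, q) (cconj (p, q)) in
      cderiv D D1 -> cderiv D1 D2 ->
      cderiv E E1 -> cderiv E1 E2 ->
      cderiv F F1 -> cderiv F1 F2 ->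
      forall t, 0 <= t ->
        Rmax (cnorm2 (D t)) (Rmax (cnorm2 (D1 t))
          (Rmax (cnorm2 (cscale (/ sqrt mu) (D2 t)))
                (cnorm2 (cscale (/ (mu * sqrt mu)) (D2 t))))) <= Bfin r p q mu /\
        Rmax (cnorm2 (E t)) (Rmax (cnorm2 (E1 t))
          (Rmax (cnorm2 (cscale (/ sqrt mu) (E2 t)))
                (cnorm2 (cscale (/ (mu * sqrt mu)) (E2 t))))) <= Bfin r p q mu /\
        Rmax (cnorm2 (cscale (sqrt mu) (F t)))
          (Rmax (cnorm2 (cscale mu (F t)))
            (Rmax (cnorm2 (cscale (sqrt mu) (F1 t)))
              (Rmax (cnorm2 (F2 t))
                    (cnorm2 (cscale (/ sqrt mu) (F2 t)))))) <= Bfin r p q mu.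
Proof.
  intros hmu hr hp hq D1 D2 E1 E2 F1 F2 D E F HD1 HD2 HE1 HE2 HF1 HF2 t ht.
  set (l1 := RtoC r) in *. set (l2 := (p, q)) in *. set (l3 := cconj (p, q)) in *.
  assert (f1 : fst l1 <= 0) by (simpl; auto).
  assert (f2 : fst l2 <= 0) by (simpl; auto).
  assert (f3 : fst l3 <= 0) by (simpl; auto).
  set (aD1 := cdiv (cmul l2 l3) (xi1 l1 l2 l3)).
  set (aD2 := copp (cdiv (cmul l1 l3) (xi2 l1 l2 l3))).
  set (aD3 := cdiv (cmul l1 l2) (xi3 l1 l2 l3)).
  set (aE1 := cdiv (cadd l2 l3) (xi1 l1 l2 l3)).
  set (aE2 := copp (cdiv (cadd l1 l3) (xi2 l1 l2 l3))).
  set (aE3 := cdiv (cadd l1 l2) (xi3 l1 l2 l3)).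
  set (aF1 := cinv (xi1 l1 l2 l3)).
  set (aF2 := copp (cinv (xi2 l1 l2 l3))).
  set (aF3 := cinv (xi3 l1 l2 l3)).
  assert (hD : forall t, D t = G3 aD1 aD2 aD3 l1 l2 l3 0 t).
  { intro s; unfold D, Afun; rewrite shapeA; reflexivity. }
  assert (hE : forall t, E t = G3 aE1 aE2 aE3 l1 l2 l3 0 t).
  { intro s; unfold E, Bfun; rewrite shapeB; reflexivity. }
  assert (hF : forall t, F t = G3 aF1 aF2 aF3 l1 l2 l3 0 t).
  { intro s; unfold F, Cfun; rewrite shapeA; reflexivity. }
  pose proof (cderiv_uniq _ _ _ (cderiv_fext _ _ _ hD HD1) (G3_deriv aD1 aD2 aD3 l1 l2 l3 0)) as hD1.
  pose proof (cderiv_uniq _ _ _ (cderiv_fext _ _ _ hD1 HD2) (G3_deriv aD1 aD2 aD3 l1 l2 l3 1)) as hD2.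
  pose proof (cderiv_uniq _ _ _ (cderiv_fext _ _ _ hE HE1) (G3_deriv aE1 aE2 aE3 l1 l2 l3 0)) as hE1.
  pose proof (cderiv_uniq _ _ _ (cderiv_fext _ _ _ hE1 HE2) (G3_deriv aE1 aE2 aE3 l1 l2 l3 1)) as hE2.
  pose proof (cderiv_uniq _ _ _ (cderiv_fext _ _ _ hF HF1) (G3_deriv aF1 aF2 aF3 l1 l2 l3 0)) as hF1.
  pose proof (cderiv_uniq _ _ _ (cderiv_fext _ _ _ hF1 HF2) (G3_deriv aF1 aF2 aF3 l1 l2 l3 1)) as hF2.
  assert (HB : Bgen (cnorm2 aD1) (cnorm2 aD2) (cnorm2 aD3) (cnorm2 aE1) (cnorm2 aE2) (cnorm2 aE3)
                    (cnorm2 aF1) (cnorm2 aF2) (cnorm2 aF3) (cnorm2 l1) (cnorm2 l2) (cnorm2 l3) mu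
               = Bfin r p q mu).
  { destruct (norms r p q hq) as (e1 & e2 & e3 & e4 & e5 & e6 & e7 & e8 & e9 & e10 & e11 & e12).
    unfold aD1, aD2, aD3, aE1, aE2, aE3, aF1, aF2, aF3, l1, l2, l3.
    rewrite e1, e2, e3, e4, e5, e6, e7, e8, e9, e10, e11, e12. reflexivity. }
  rewrite <- HB. unfold Bgen.
  destruct (scale_facts mu hmu) as (s1 & s2 & s3 & s4).
  assert (hmu2 : 0 < / mu) by (apply Rinv_0_lt_compat; auto).
  assert (hmu3 : 0 < / mu ^ 3) by (apply Rinv_0_lt_compat; apply pow_lt; auto).
  assert (T : forall a1 a2 a3 k, 0 <= Tsum (cnorm2 a1) (cnorm2 a2) (cnorm2 a3) (cnorm2 l1) (cnorm2 l2) (cnorm2 l3) k)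
    by (intros; apply Tsum_ge0; apply cnorm2_ge0).
  assert (Bd : forall a1 a2 a3 k f s f2, (forall t, f t = G3 a1 a2 a3 l1 l2 l3 k t) -> f2 = s ^ 2 ->
     cnorm2 (cscale s (f t)) <= f2 * Tsum (cnorm2 a1) (cnorm2 a2) (cnorm2 a3) (cnorm2 l1) (cnorm2 l2) (cnorm2 l3) k)
    by (intros; apply G3_eq_bound; auto).
  pose proof (Bd _ _ _ _ _ _ _ hD s4) as b1. pose proof (Bd _ _ _ _ _ _ _ hD1 s4) as b2.
  pose proof (Bd _ _ _ _ _ _ _ hD2 s1) as b3. pose proof (Bd _ _ _ _ _ _ _ hD2 s2) as b4.
  pose proof (Bd _ _ _ _ _ _ _ hE s4) as b5. pose proof (Bd _ _ _ _ _ _ _ hE1 s4) as b6.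
  pose proof (Bd _ _ _ _ _ _ _ hE2 s1) as b7. pose proof (Bd _ _ _ _ _ _ _ hE2 s2) as b8.
  pose proof (Bd _ _ _ _ _ _ _ hF s3) as b9.
  assert (s5 : mu ^ 2 = mu ^ 2) by reflexivity.
  pose proof (Bd _ _ _ _ _ _ _ hF s5) as b10.
  pose proof (Bd _ _ _ _ _ _ _ hF1 s3) as b11.
  pose proof (Bd _ _ _ _ _ _ _ hF2 s4) as b12. pose proof (Bd _ _ _ _ _ _ _ hF2 s1) as b13.
  rewrite !cscale1 in *.
  pose proof (T aD1 aD2 aD3 0%nat). pose proof (T aD1 aD2 aD3 1%nat). pose proof (T aD1 aD2 aD3 2%nat).
  pose proof (T aE1 aE2 aE3 0%nat). pose proof (T aE1 aE2 aE3 1%nat). pose proof (T aE1 aE2 aE3 2%nat).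
  pose proof (T aF1 aF2 aF3 0%nat). pose proof (T aF1 aF2 aF3 1%nat). pose proof (T aF1 aF2 aF3 2%nat).
  set (X1 := Tsum (cnorm2 aD1) (cnorm2 aD2) (cnorm2 aD3) (cnorm2 l1) (cnorm2 l2) (cnorm2 l3) 0) in *.
  set (X2 := Tsum (cnorm2 aD1) (cnorm2 aD2) (cnorm2 aD3) (cnorm2 l1) (cnorm2 l2) (cnorm2 l3) 1) in *.
  set (X3 := Tsum (cnorm2 aD1) (cnorm2 aD2) (cnorm2 aD3) (cnorm2 l1) (cnorm2 l2) (cnorm2 l3) 2) in *.
  set (Y1 := Tsum (cnorm2 aE1) (cnorm2 aE2) (cnorm2 aE3) (cnorm2 l1) (cnorm2 l2) (cnorm2 l3) 0) in *.
  set (Y2 := Tsum (cnorm2 aE1) (cnorm2 aE2) (cnorm2 aE3) (cnorm2 l1) (cnorm2 l2) (cnorm2 l3) 1) in *.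
  set (Y3 := Tsum (cnorm2 aE1) (cnorm2 aE2) (cnorm2 aE3) (cnorm2 l1) (cnorm2 l2) (cnorm2 l3) 2) in *.
  set (Z1 := Tsum (cnorm2 aF1) (cnorm2 aF2) (cnorm2 aF3) (cnorm2 l1) (cnorm2 l2) (cnorm2 l3) 0) in *.
  set (Z2 := Tsum (cnorm2 aF1) (cnorm2 aF2) (cnorm2 aF3) (cnorm2 l1) (cnorm2 l2) (cnorm2 l3) 1) in *.
  set (Z3 := Tsum (cnorm2 aF1) (cnorm2 aF2) (cnorm2 aF3) (cnorm2 l1) (cnorm2 l2) (cnorm2 l3) 2) in *.
  assert (0 <= / mu * X3) by (apply Rmult_le_pos; lra).
  assert (0 <= / mu ^ 3 * X3) by (apply Rmult_le_pos; lra).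
  assert (0 <= / mu * Y3) by (apply Rmult_le_pos; lra).
  assert (0 <= / mu ^ 3 * Y3) by (apply Rmult_le_pos; lra).
  assert (0 <= mu * Z1) by (apply Rmult_le_pos; lra).
  assert (0 <= mu ^ 2 * Z1) by (apply Rmult_le_pos; [apply pow_le|]; lra).
  assert (0 <= mu * Z2) by (apply Rmult_le_pos; lra).
  assert (0 <= / mu * Z3) by (apply Rmult_le_pos; lra).
  repeat split; repeat apply Rmax_lub; lra.
Qed.

Lemma fin_max (f : nat -> R) N : exists K, forall n, (n < N)%nat -> f n <= K.
Proof.
  induction N. exists 0; intros; lia.
  destruct IHN as [K HK]. exists (Rmax K (f N)). intros n hn.
  destruct (Nat.eq_dec n N). subst; apply Rmax_r.
  eapply Rle_trans; [apply HK; lia|apply Rmax_l].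
Qed.

Theorem lemma4p5 (T alpha b c : R) (lam : nat -> R) (r1 : nat -> R) (r2 : nat -> cplx)
  (hT : 0 < T) (hb : 0 < b) (hgamma : 0 < alpha - c ^ 2 / b)
  (hlam_pos : forall n, 0 < lam n)
  (hlam_mono : forall n, lam n <= lam (S n))
  (hlam_inf : forall M, exists n, M < lam n)
  (hr1 : forall n, cubic alpha b c (lam n) (RtoC (r1 n)) = RtoC 0)
  (hr2 : forall n, cubic alpha b c (lam n) (r2 n) = RtoC 0)
  (hr2_nonreal : forall n, snd (r2 n) <> 0) :
  exists K : R, 0 < K /\
    forall (n : nat) (D1 D2 E1 E2 F1 F2 : R -> cplx),
      let D := Afun (RtoC (r1 n)) (r2 n) (cconj (r2 n)) in
      let E := fun t => copp (Bfun (RtoC (r1 n)) (r2 n) (cconj (r2 n)) t) in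
      let F := Cfun (RtoC (r1 n)) (r2 n) (cconj (r2 n)) in
      cderiv D D1 -> cderiv D1 D2 ->
      cderiv E E1 -> cderiv E1 E2 ->
      cderiv F F1 -> cderiv F1 F2 ->
      forall t, 0 <= t <= T ->
        Rmax (cnorm2 (D t)) (Rmax (cnorm2 (D1 t))
          (Rmax (cnorm2 (cscale (/ sqrt (lam n)) (D2 t)))
                (cnorm2 (cscale (/ (lam n * sqrt (lam n))) (D2 t))))) <= K /\
        Rmax (cnorm2 (E t)) (Rmax (cnorm2 (E1 t))
          (Rmax (cnorm2 (cscale (/ sqrt (lam n)) (E2 t)))
                (cnorm2 (cscale (/ (lam n * sqrt (lam n))) (E2 t))))) <= K /\
        Rmax (cnorm2 (cscale (sqrt (lam n)) (F t)))
          (Rmax (cnorm2 (cscale (lam n) (F t)))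
            (Rmax (cnorm2 (cscale (sqrt (lam n)) (F1 t)))
              (Rmax (cnorm2 (F2 t))
                    (cnorm2 (cscale (/ sqrt (lam n)) (F2 t)))))) <= K.
Proof.
  assert (mono : forall n k, lam n <= lam (n + k)%nat).
  { intros n k; induction k. rewrite Nat.add_0_r; lra.
    rewrite Nat.add_succ_r. eapply Rle_trans; [apply IHk| apply hlam_mono]. }
  destruct (hlam_inf (1 + alpha ^ 2 / b)) as [n0 Hn0].
  set (Bn := fun n => Bfin (r1 n) (fst (r2 n)) (snd (r2 n)) (lam n)).
  destruct (fin_max Bn n0) as [K1 HK1].
  set (K0 := 234 * (10 + 2 / b + b + alpha ^ 2) ^ 7).
  assert (HB : forall n, Bn n <= Rmax 1 (Rmax K0 K1)).
  { intro n. destruct (Nat.lt_ge_cases n n0) as [h|h].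
    - eapply Rle_trans; [apply HK1; auto|]. eapply Rle_trans; [apply Rmax_r|apply Rmax_r].
    - eapply Rle_trans; [|eapply Rle_trans; [apply Rmax_l|apply Rmax_r]].
      assert (hl : 1 + alpha ^ 2 / b < lam n).
      { replace n with (n0 + (n - n0))%nat by lia. eapply Rlt_le_trans; [apply Hn0|apply mono]. }
      assert (hab : alpha ^ 2 / b * b = alpha ^ 2) by (field; lra).
      assert (0 <= alpha ^ 2 / b) by (unfold Rdiv; apply Rmult_le_pos; [apply pow2_ge_0| left; apply Rinv_0_lt_compat; auto]).
      pose proof (hr2 n) as H2. rewrite (surjective_pairing (r2 n)) in H2.
      destruct (roots_facts alpha b c (lam n) (r1 n) (fst (r2 n)) (snd (r2 n)) hb hgamma (hlam_pos n)
                  (hr1 n) H2 (hr2_nonreal n)) as (f1 & f2 & f3 & f4 & f5 & f6).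
      unfold Bn, K0. apply asym; auto; nra. }
  exists (Rmax 1 (Rmax K0 K1)). split. { eapply Rlt_le_trans; [|apply Rmax_l]; lra. }
  intros n D1 D2 E1 E2 F1 F2 D E F HD1 HD2 HE1 HE2 HF1 HF2 t ht.
  pose proof (hr2 n) as H2. rewrite (surjective_pairing (r2 n)) in H2.
  destruct (roots_facts alpha b c (lam n) (r1 n) (fst (r2 n)) (snd (r2 n)) hb hgamma (hlam_pos n)
              (hr1 n) H2 (hr2_nonreal n)) as (f1 & f2 & f3 & f4 & f5 & f6).
  unfold D, E, F in *. rewrite (surjective_pairing (r2 n)) in *.
  destruct (per_n (lam n) (r1 n) (fst (r2 n)) (snd (r2 n)) (hlam_pos n) f1 f2 (hr2_nonreal n)
              D1 D2 E1 E2 F1 F2 HD1 HD2 HE1 HE2 HF1 HF2 t (proj1 ht)) as (g1 & g2 & g3).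
  pose proof (HB n) as hb'. unfold Bn in hb'.
  repeat split; eapply Rle_trans; eauto.
Qed.
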